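(* Suppose $P$ has a positive real eigenvalue different from $1$, and let $\theta$ be the largest positive real eigenvalue of $P$ different from $1$. Then for every allowed word $u$ of $\Sigma_A$, the escape rate into the cylinder $C_u$ satisfies $0<\rho(C_u)\le-\ln\theta$.
   Context: Let $\Sigma=\{1,\dots,N\}$, $A$ an irreducible $N\times N$ $0$–$1$ matrix, $\Sigma_A=\{x\in\Sigma^{\mathbb N}:A_{x_nx_{n+1}}=1\ \forall n\}$ with left shift $\sigma$. A word is allowed if it occurs in some element of $\Sigma_A$; $C_u$ is the set of $x\in\Sigma_A$ beginning with $u$. $P$ is a row-stochastic matrix with $P_{ij}>0$ iff $A_{ij}=1$, $\mathbf p$ its stationary vector, $\mu=\mu_P$ the Markov measure $\mu(C_w)=p_{w_1}P_{w_1w_2}\cdots P_{w_{n-1}w_n}$. For a hole $H\subseteq\Sigma_A$, $\mathcal W_m=\{x:\sigma^ix\notin H,0\le i\le m\}$ and $\rho(H)=-\lim_m\frac1m\ln\mu(\mathcal W_m)$. *)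

(* Defs.v *)
From HB Require Import structures.
From mathcomp Require Import all_boot all_order all_algebra.
From mathcomp Require Import all_classical all_reals all_analysis.
Set Implicit Arguments. Unset Strict Implicit. Unset Printing Implicit Defensive.
Import Order.TTheory GRing.Theory Num.Theory.
Local Open Scope ring_scope.

Section Defs.
Variables (R : realType) (N : nat).

Definition zero_one (A : 'M[R]_N) : Prop :=
  forall i j, A i j = 0 \/ A i j = 1.

Definition irreducible_mx (A : 'M[R]_N) : Prop :=
  forall i j, exists k : nat, (0 < k)%N /\ 0 < (A ^+ k) i j.

Definition row_stochastic (P : 'M[R]_N) : Prop :=
  (forall i j, 0 <= P i j) /\ (forall i, \sum_j P i j = 1).

Definition stationary (P : 'M[R]_N) (p : 'rV[R]_N) : Prop :=
  (forall i, 0 <= p 0 i) /\ \sum_i p 0 i = 1 /\ p *m P = p.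

Definition SigmaA (A : 'M[R]_N) (x : nat -> 'I_N) : Prop :=
  forall n, A (x n) (x n.+1) = 1.

Definition allowed (A : 'M[R]_N) (u : seq 'I_N) : Prop :=
  exists x k, SigmaA A x /\ mkseq (fun i => x (k + i)%N) (size u) = u.

Fixpoint path_prob (P : 'M[R]_N) (a : 'I_N) (t : seq 'I_N) : R :=
  match t with
  | [::] => 1
  | b :: t' => P a b * path_prob P b t'
  end.

(* mu(C_w) = p_{w1} P_{w1 w2} ... P_{w_{n-1} w_n} *)
Definition mu_cyl (P : 'M[R]_N) (p : 'rV[R]_N) (w : seq 'I_N) : R :=
  match w with
  | [::] => 1
  | a :: t => p 0 a * path_prob P a t
  end.

(* For the hole H = C_u, W_m = {x : sigma^i x \notin C_u, 0 <= i <= m} is the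
   disjoint union of the cylinders C_w, |w| = m + |u|, such that u does not
   occur in w at any position i with 0 <= i <= m.  Hence mu(W_m) is the
   following finite sum of cylinder measures. *)
Definition avoids_upto (u : seq 'I_N) (m : nat) (w : seq 'I_N) : bool :=
  [forall i : 'I_m.+1, take (size u) (drop i w) != u].

Definition mu_W (P : 'M[R]_N) (p : 'rV[R]_N) (u : seq 'I_N) (m : nat) : R :=
  \sum_(w : (m + size u).-tuple 'I_N | avoids_upto u m w) mu_cyl P p w.

End Defs.

(* Main.v *)
Set Warnings "-notation-overridden,-ambiguous-paths,-notation-incompatible-prefix".
Require Import Defs.
From HB Require Import structures.
From mathcomp Require Import all_boot all_order all_algebra.
From mathcomp Require Import all_classical all_reals all_analysis.
From mathcomp Require Import ring lra zify.
Import Order.TTheory GRing.Theory Num.Theory numFieldNormedType.Exports.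
Local Open Scope classical_set_scope.
Local Open Scope ring_scope.
Set Implicit Arguments. Unset Strict Implicit. Unset Printing Implicit Defensive.
Section Walk.
Variables (R : realType) (N : nat) (P : 'M[R]_N) (u : seq 'I_N).
Hypothesis P0 : forall i j, 0 <= P i j.
Hypothesis P1 : forall i, \sum_j P i j = 1.

Definition occ (a : 'I_N) x := infix u (a :: x).
Arguments occ : simpl never.

Fixpoint Wt (n : nat) (a : 'I_N) (x : seq 'I_N) : R :=
  match n with
  | 0 => if occ a x then 0 else 1
  | n'.+1 => \sum_b P (last a x) b * Wt n' a (rcons x b)
  end.

Lemma Wt_ge0 n a x : 0 <= Wt n a x.
Proof.
elim: n x => [|n IH] x /=; first by case: ifP.
by apply: sumr_ge0 => b _; apply: mulr_ge0.
Qed.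

Lemma Wt_le1 n a x : Wt n a x <= 1.
Proof.
elim: n x => [|n IH] x /=; first by case: ifP.
rewrite -(P1 (last a x)); apply: ler_sum => b _.
by rewrite -[leRHS]mulr1; apply: ler_wpM2l.
Qed.

Lemma infix_rc (a b : 'I_N) x : occ a x -> occ a (rcons x b).
Proof. by rewrite /occ => H; rewrite -rcons_cons; apply: (infix_trans H); rewrite -cats1 prefix_infix. Qed.

Lemma Wt_infix n a x : occ a x -> Wt n a x = 0.
Proof.
elim: n x => [|n IH] x /= H; first by rewrite H.
by apply: big1 => b _; rewrite IH ?mulr0 // infix_rc.
Qed.

Lemma Wt_mono n a x : Wt n.+1 a x <= Wt n a x.
Proof.
elim: n x => [|n IH] x /=.
  case: ifP => H.
    by rewrite big1 // => b _; rewrite infix_rc ?mulr0.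
  rewrite -[in leRHS](P1 (last a x)); apply: ler_sum => b _.
  by rewrite -[leRHS]mulr1; apply: ler_wpM2l => //; case: ifP => _; rewrite ?ler01.
by apply: ler_sum => b _; apply: ler_wpM2l => //; apply: IH.
Qed.

Lemma Wt_hit t a x : occ a (x ++ t) ->
  Wt (size t) a x <= 1 - path_prob P (last a x) t.
Proof.
elim: t x => [|b t IH] x /=.
  by rewrite cats0 => H; rewrite H subrr.
move=> H.
rewrite (bigD1 b) //=.
have := IH (rcons x b); rewrite last_rcons cat_rcons => /(_ H) Hb.
have Hrest : \sum_(i | i != b) P (last a x) i * Wt (size t) a (rcons x i)
   <= \sum_(i | i != b) P (last a x) i.
  by apply: ler_sum => i _; rewrite -[leRHS]mulr1; apply: ler_wpM2l => //; apply: Wt_le1.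
have Hs : \sum_i P (last a x) i = P (last a x) b + \sum_(i | i != b) P (last a x) i.
  by rewrite (bigD1 b).
have Hb' : P (last a x) b * Wt (size t) a (rcons x b) <= P (last a x) b * (1 - path_prob P b t).
  by apply: ler_wpM2l.
rewrite P1 in Hs.
have -> : 1 - P (last a x) b * path_prob P b t = P (last a x) b * (1 - path_prob P b t) + \sum_(i | i != b) P (last a x) i.
  by rewrite [1 in LHS]Hs; ring.
by apply: lerD.
Qed.

Lemma Wt_drop l a x c z :
  Wt l a (x ++ c :: z) <= (if occ a x then 0 else 1) * Wt l c z.
Proof.
elim: l z => [|l IH] z /=.
  case: ifP => H1; first by apply: mulr_ge0; case: ifP.
  case: ifP => H2.
    by move: H1; rewrite /occ -cat_cons (infix_catr _ H2).
  case: ifP => H3; last by rewrite mulr1.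
  by move: H1; rewrite /occ -cat_cons (infix_catl (a :: x) H3).
rewrite mulr_sumr; apply: ler_sum => b _.
rewrite last_cat /= -cats1 -catA cat_cons cats1.
rewrite mulrCA; apply: ler_wpM2l => //.
Qed.

Definition mx2 (a b : R) := if a <= b then b else a.
Definition mxs (F : 'I_N -> R) := \big[mx2/0]_i F i.

Lemma mx2_l a b : a <= mx2 a b.
Proof. by rewrite /mx2; case: ifP. Qed.
Lemma mx2_r a b : b <= mx2 a b.
Proof. by rewrite /mx2; case: ifP => // /negbT; rewrite -ltNge => /ltW. Qed.
Lemma mx2_le a b c : a <= c -> b <= c -> mx2 a b <= c.
Proof. by rewrite /mx2; case: ifP. Qed.

Lemma mxs_ge0 F : 0 <= mxs F.
Proof. by rewrite /mxs; elim/big_rec: _ => // i x _ hx; apply: le_trans hx (mx2_r _ _). Qed.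

Lemma mxs_ub F i : F i <= mxs F.
Proof.
rewrite /mxs; have : i \in index_enum 'I_N by rewrite mem_index_enum.
elim: (index_enum 'I_N) => [|j r IH] //; rewrite inE big_cons => /orP[/eqP ->|/IH H].
  exact: mx2_l.
exact: le_trans H (mx2_r _ _).
Qed.

Lemma mxs_le F y : 0 <= y -> (forall i, F i <= y) -> mxs F <= y.
Proof. by move=> y0 H; rewrite /mxs; elim/big_rec: _ => // i x _ hx; apply: mx2_le. Qed.

Lemma mxs_lt F y : 0 < y -> (forall i, F i < y) -> mxs F < y.
Proof. by move=> y0 H; rewrite /mxs; elim/big_rec: _ => // i x _ hx; rewrite /mx2; case: ifP. Qed.

Lemma Wt_mono_gen k k' a x : (k <= k')%N -> Wt k' a x <= Wt k a x.
Proof.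
move=> /subnKC <-; elim: (k' - k)%N => [|d IH]; first by rewrite addn0.
by rewrite addnS; apply: le_trans (Wt_mono _ _ _) IH.
Qed.

Definition Emx n := mxs (fun s => Wt n s [::]).

Lemma Wt_split n l a x : Wt (n + l).+1 a x <= Wt n a x * Emx l.
Proof.
elim: n x => [|n IH] x /=.
  rewrite add0n.
  have -> : (if occ a x then 0 else 1) * Emx l =
     \sum_b P (last a x) b * ((if occ a x then 0 else 1) * Emx l).
    by rewrite -mulr_suml P1 mul1r.
  apply: ler_sum => b _; apply: ler_wpM2l => //.
  rewrite -cats1; apply: le_trans (Wt_drop l a x b [::]) _.
  apply: ler_wpM2l; first by case: ifP.
  exact: (mxs_ub (fun s => Wt l s [::]) b).
rewrite mulr_suml; apply: ler_sum => b _; rewrite -mulrA; apply: ler_wpM2l => //.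
exact: IH.
Qed.

Lemma Emx_split n l : Emx (n + l).+1 <= Emx n * Emx l.
Proof.
apply: mxs_le; first by apply: mulr_ge0; apply: mxs_ge0.
move=> s; apply: le_trans (Wt_split n l s [::]) _.
apply: ler_wpM2r; first exact: mxs_ge0.
exact: (mxs_ub (fun s => Wt n s [::]) s).
Qed.

End Walk.
Section Eig.
Variables (R : realType) (N : nat) (P : 'M[R]_N) (u0 : 'I_N) (u' : seq 'I_N).
Hypothesis P0 : forall i j, 0 <= P i j.
Hypothesis P1 : forall i, \sum_j P i j = 1.
Variables (v : 'I_N -> R) (th : R).
Hypothesis Pv : forall a, \sum_b P a b * v b = th * v a.
Hypothesis th0 : 0 < th.
Hypothesis vL : v (last u0 u') <= 0.
Let u := u0 :: u'.

Fixpoint Dv (n : nat) (a : 'I_N) (x : seq 'I_N) : R :=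
  match n with
  | 0 => if occ u a x then 0 else v (last a x)
  | n'.+1 => \sum_b P (last a x) b * Dv n' a (rcons x b)
  end.

Lemma Dv_infix n a x : occ u a x -> Dv n a x = 0.
Proof.
elim: n x => [|n IH] x /= H; first by rewrite H.
by apply: big1 => b _; rewrite IH ?mulr0 // infix_rc.
Qed.

Lemma occ_last a x b : ~~ occ u a x -> occ u a (rcons x b) -> b = last u0 u'.
Proof.
rewrite /occ -rcons_cons infix_rconsl => /negbTE ->; rewrite orbF.
case/suffixP => s /(congr1 (last a)); rewrite last_rcons last_cat /=.
by [].
Qed.

Lemma Dv_lb n a x : ~~ occ u a x -> th ^+ n * v (last a x) <= Dv n a x.
Proof.
elim: n x => [|n IH] x H /=; first by rewrite (negbTE H) expr0 mul1r.
have -> : th ^+ n.+1 * v (last a x) = \sum_b P (last a x) b * (th ^+ n * v b).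
  by rewrite exprSr -mulrA -Pv mulr_sumr; apply: eq_bigr => b _; ring.
apply: ler_sum => b _; apply: ler_wpM2l => //.
case H2: (occ u a (rcons x b)).
  rewrite Dv_infix // (occ_last H H2).
  by rewrite pmulr_rle0 ?exprn_gt0.
by have := IH (rcons x b) (negbT H2); rewrite last_rcons.
Qed.

Lemma Dv_ub n a x : Dv n a x <= (\sum_i `|v i|) * Wt P u n a x.
Proof.
elim: n x => [|n IH] x /=.
  case: ifP => _; first by rewrite mulr0.
  rewrite mulr1; apply: le_trans (ler_norm _) _.
  rewrite (bigD1 (last a x)) //= lerDl; apply: sumr_ge0 => i _; exact: normr_ge0.
rewrite mulr_sumr; apply: ler_sum => b _; rewrite mulrCA; apply: ler_wpM2l => //.
Qed.

End Eig.
Lemma tsum_cons (R : realType) (T : finType) n (F : seq T -> R) :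
  \sum_(w : n.+1.-tuple T) F w = \sum_s \sum_(t : n.-tuple T) F (s :: t).
Proof.
rewrite pair_big /=.
rewrite (reindex (fun p : T * n.-tuple T => [tuple of p.1 :: p.2])) //=.
exists (fun w : n.+1.-tuple T => (thead w, [tuple of behead w])).
  by case=> s t _; rewrite /= theadE; congr (_, _); apply: val_inj.
by move=> w _; apply: val_inj => /=; case: w => [[|a w]] //=.
Qed.

Lemma tsum_cons' (R : realType) (T : finType) k n (F : seq T -> R) : k = n.+1 ->
  \sum_(w : k.-tuple T) F w = \sum_s \sum_(t : n.-tuple T) F (s :: t).
Proof. by move=> ->; apply: tsum_cons. Qed.

Lemma tsum0 (R : realType) (T : finType) (F : seq T -> R) :
  \sum_(w : 0.-tuple T) F w = F [::].
Proof. by rewrite (big_pred1 [tuple]) // => t; symmetry; apply/eqP; exact: tuple0. Qed.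

Lemma Wt_tuple (R : realType) N (P : 'M[R]_N) u n a x :
  \sum_(t : n.-tuple 'I_N) path_prob P (last a x) t * (if occ u a (x ++ t) then 0 else 1)
  = Wt P u n a x.
Proof.
elim: n x => [|n IH] x /=.
  by rewrite (tsum0 (fun t => path_prob P (last a x) t * (if occ u a (x ++ t) then 0 else 1))) /= cats0 mul1r.
rewrite (tsum_cons n (fun t => path_prob P (last a x) t * (if occ u a (x ++ t) then 0 else 1))); apply: eq_bigr => b _.
rewrite -IH mulr_sumr; apply: eq_bigr => t _ /=.
by rewrite last_rcons cat_rcons mulrA.
Qed.

Lemma avoidsE N (u : seq 'I_N) m (w : seq 'I_N) : size w = (m + size u)%N ->
  avoids_upto u m w = ~~ infix u w.
Proof.
move=> Hs; apply/forallP/negP.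
- move=> H /infixP [s [s' E]].
  have Hi : (size s < m.+1)%N.
    move: Hs; rewrite E !size_cat addnCA [in RHS]addnC => /addnI <-; rewrite ltnS; exact: leq_addr.
  by move: (H (Ordinal Hi)); rewrite /= E drop_size_cat // take_size_cat // eqxx.
- move=> H i; apply/eqP => E; apply: H; apply/infixP.
  exists (take i w), (drop (size u) (drop i w)).
  move: E; set k := size u => E; rewrite -E.
  by rewrite !cat_take_drop.
Qed.

Lemma muW_eq (R : realType) N (P : 'M[R]_N) p u m L' : size u = L'.+1 ->
  mu_W P p u m = \sum_s p 0 s * Wt P u (m + L')%N s [::].
Proof.
move=> Hu; rewrite /mu_W big_mkcond /=.
rewrite (@tsum_cons' _ _ _ (m + L')%N (fun w => if avoids_upto u m w then mu_cyl P p w else 0)); last by rewrite Hu addnS.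
apply: eq_bigr => s _; rewrite -Wt_tuple mulr_sumr; apply: eq_bigr => t _ /=.
rewrite avoidsE; last by rewrite /= size_tuple Hu addnS.
by rewrite /occ; case: (infix u (s :: t)) => /=; rewrite ?mulr0 ?mulr1.
Qed.
Lemma sum_pos_ex (R : realType) N (F : 'I_N -> R) : 0 < \sum_i F i -> exists i, 0 < F i.
Proof.
move=> H; apply/existsP; apply: contraTT H; rewrite negb_exists => /forallP H'.
rewrite -leNgt; apply: sumr_le0 => i _; rewrite leNgt; exact: H'.
Qed.

Lemma power_path (R : realType) N (M : 'M[R]_N) k i j :
  (forall a b, 0 <= M a b) -> 0 < (M ^+ k.+1) i j ->
  exists t, path (fun a b => 0 < M a b) i (rcons t j).
Proof.
move=> M0; elim: k i => [|k IH] i.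
  by rewrite expr1 => H; exists [::]; rewrite /= H.
rewrite exprS -mulmxE mxE => /sum_pos_ex [l Hl].
have Mil : 0 < M i l.
  rewrite lt_def M0 andbT; apply: contraTN Hl => /eqP ->; by rewrite mul0r ltxx.
rewrite pmulr_rgt0 // in Hl.
have [t Ht] := IH l Hl.
by exists (l :: t); rewrite /= Mil.
Qed.

Lemma path_prob_pos (R : realType) N (P : 'M[R]_N) a t :
  path (fun a b => 0 < P a b) a t -> 0 < path_prob P a t.
Proof.
elim: t a => [|b t IH] a //= /andP [H1 H2].
by rewrite mulr_gt0 // IH.
Qed.

Lemma stat_pos_step (R : realType) N (P : 'M[R]_N) (p : 'rV[R]_N) a b :
  row_stochastic P -> stationary P p -> 0 < p 0 a -> 0 < P a b -> 0 < p 0 b.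
Proof.
move=> [P0 _] [p0 [_ pP]] ha hab.
rewrite -pP mxE (bigD1 a) //=.
apply: lt_le_trans (mulr_gt0 ha hab) _; rewrite lerDl.
by apply: sumr_ge0 => i _; apply: mulr_ge0.
Qed.

Lemma stat_pos_path (R : realType) N (P : 'M[R]_N) (p : 'rV[R]_N) a t :
  row_stochastic P -> stationary P p -> 0 < p 0 a ->
  path (fun a b => 0 < P a b) a t -> 0 < p 0 (last a t).
Proof.
move=> HP Hp; elim: t a => [|b t IH] a //= ha /andP [H1 H2].
by apply: IH => //; apply: stat_pos_step H1.
Qed.

Lemma rel_AP (R : realType) N (A P : 'M[R]_N) :
  zero_one A -> (forall i j, 0 < P i j <-> A i j = 1) ->
  (fun a b => 0 < A a b) =2 (fun a b => 0 < P a b).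
Proof.
move=> ZA HPA a b /=; case: (ZA a b) => H.
  rewrite H ltxx; apply/esym/negbTE/negP => /HPA; rewrite H => /eqP; by rewrite eq_sym oner_eq0.
by rewrite H ltr01; apply/esym/HPA.
Qed.

Lemma irr_path (R : realType) N (A P : 'M[R]_N) i j :
  zero_one A -> irreducible_mx A -> (forall i j, 0 < P i j <-> A i j = 1) ->
  exists t, path (fun a b => 0 < P a b) i (rcons t j).
Proof.
move=> ZA IA HPA.
have A0 : forall a b, 0 <= A a b by move=> a b; case: (ZA a b) => ->.
have [[|k] [k0 Hk]] := IA i j => //.
have [t Ht] := power_path A0 Hk.
by exists t; rewrite -(eq_path (rel_AP ZA HPA)).
Qed.

Lemma stat_all_pos (R : realType) N (A P : 'M[R]_N) (p : 'rV[R]_N) :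
  zero_one A -> irreducible_mx A -> row_stochastic P -> (forall i j, 0 < P i j <-> A i j = 1) ->
  stationary P p -> forall j, 0 < p 0 j.
Proof.
move=> ZA IA HP HPA Hp j.
have [i0 Hi0] : exists i, 0 < p 0 i.
  by apply: sum_pos_ex; case: Hp => _ [-> _]; exact: ltr01.
have [t Ht] := irr_path i0 j ZA IA HPA.
by have := stat_pos_path HP Hp Hi0 Ht; rewrite last_rcons.
Qed.

Lemma path_shift (T : Type) (r : T -> T -> bool) (f : nat -> T) j n :
  (forall i, r (f i) (f i.+1)) -> path r (f j) [seq f i | i <- iota j.+1 n].
Proof.
move=> H; elim: n j => [|n IH] j //=.
by rewrite H IH.
Qed.

Lemma allowed_path (R : realType) N (A P : 'M[R]_N) u0 u' :
  zero_one A -> (forall i j, 0 < P i j <-> A i j = 1) ->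
  allowed A (u0 :: u') -> path (fun a b => 0 < P a b) u0 u'.
Proof.
move=> ZA HPA [x [k [Sx Hx]]].
rewrite -(eq_path (rel_AP ZA HPA)).
move: Hx; rewrite /mkseq /= => [[<- <-]].
have := @path_shift _ (fun a b => 0 < A a b) (fun i => x (k + i)%N) 0 (size u').
rewrite addn0; apply => i /=; rewrite addnS (Sx (k + i)%N); exact: ltr01.
Qed.
Section Fek.
Variables (R : realType) (E B : nat -> R) (c0 th pm : R) (K L' : nat).
Hypothesis c00 : 0 < c0.
Hypothesis th0 : 0 < th.
Hypothesis pm0 : 0 < pm.
Hypothesis E_lb : forall n, c0 * th ^+ n <= E n.
Hypothesis E_le1 : forall n, E n <= 1.
Hypothesis E_sub : forall n l, E (n + l).+1 <= E n * E l.
Hypothesis E_K : E K < 1.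
Hypothesis B_lb : forall n, pm * E n <= B n.
Hypothesis B_ub : forall n, B n <= E n.

Lemma E_pos n : 0 < E n.
Proof. by apply: lt_le_trans (E_lb n); rewrite mulr_gt0 // exprn_gt0. Qed.

Definition hh k := if k is k'.+1 then ln (E k') else 0.

Lemma hh_le0 k : hh k <= 0.
Proof. by case: k => [|k] //=; apply: ln_le0. Qed.

Lemma hh_sub m n : hh (m + n) <= hh m + hh n.
Proof.
case: m => [|m]; first by rewrite add0n add0r.
case: n => [|n]; first by rewrite addn0 addr0.
rewrite addSn addnS /=.
rewrite -lnM ?posrE ?E_pos //.
by rewrite ler_ln ?posrE ?mulr_gt0 ?E_pos.
Qed.

Lemma hh_mul j q : hh (j * q) <= j%:R * hh q.
Proof.
elim: j => [|j IH]; first by rewrite mul0n mul0r.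
rewrite mulSn; apply: le_trans (hh_sub _ _) _.
by rewrite -nat1r mulrDl mul1r lerD2l.
Qed.

Lemma hh_lb k : ln c0 + k%:R * ln th <= hh k.+1.
Proof.
have H := E_lb k; rewrite -ler_ln ?posrE ?E_pos ?mulr_gt0 ?exprn_gt0 // in H.
by rewrite /=; apply: le_trans H; rewrite lnM ?posrE ?exprn_gt0 // lnXn // mulr_natl.
Qed.

Definition S := [set y : R | exists2 k, (0 < k)%N & y = hh k / k%:R].

Lemma S_lb y : S y -> ln th <= y.
Proof.
case=> k k0 ->; rewrite leNgt; apply/negP => Hlt.
set z := hh k / k%:R in Hlt.
have kp : 0 < (k%:R : R) by rewrite ltr0n.
have hk : hh k = z * k%:R by rewrite /z divfK // gt_eqF.
set d := ln th - z.
have d0 : 0 < d by rewrite /d subr_gt0.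
set C := `|ln c0| + `|ln th|.
have C0 : 0 <= C by rewrite addr_ge0.
have Cd : 0 <= C / (d * k%:R) by rewrite divr_ge0 // mulr_ge0 // ltW.
set j := Num.bound (C / (d * k%:R)).
have Hj : C < j.+1%:R * (d * k%:R).
  rewrite -ltr_pdivrMr ?mulr_gt0 //; apply: lt_le_trans (archi_boundP Cd) _.
  by rewrite ler_nat.
have Hu := hh_mul j.+1 k.
rewrite hk in Hu.
have : (0 < j.+1 * k)%N by rewrite muln_gt0.
case E1 : (j.+1 * k)%N => [|n'] // _.
have Hl := hh_lb n'.
rewrite -E1 in Hl.
have Hn : (n'.+1%:R : R) = j.+1%:R * k%:R by rewrite -natrM E1.
have h1 : ln th - ln c0 <= C.
  have := ler_norm (ln th); have := ler_norm (- ln c0); rewrite normrN /C; lra.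
have := le_trans Hl Hu.
rewrite -nat1r in Hn.
rewrite /d in Hj.
nra.
Qed.

Lemma fek_main : exists rho : R,
  (fun m : nat => - (ln (B (m + L')%N) / m%:R)) @ \oo --> rho /\ 0 < rho /\ rho <= - ln th.
Proof.
have Sne : S (hh 1 / 1%:R) by exists 1%N.
have Slb : has_lbound S by exists (ln th) => y /S_lb.
set l := inf S.
have l_le k : (0 < k)%N -> l * k%:R <= hh k.
  move=> k0; have : l <= hh k / k%:R by apply: ge_inf => //; exists k.
  by rewrite ler_pdivlMr // ltr0n.
have l_ge : ln th <= l by apply: lb_le_inf; [exists (hh 1 / 1%:R) | move=> y /S_lb].
have l_neg : l < 0.
  have := l_le K.+1 isT; rewrite /= => H.
  have : ln (E K) < 0 by apply: ln_lt0; rewrite E_pos E_K.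
  have : (0 : R) < K.+1%:R by rewrite ltr0n.
  nra.
exists (- l); split; last by split; lra.
apply/cvgrPdist_lt => e e0.
have e20 : 0 < e / 2 by rewrite divr_gt0.
have [y [q q0 ->] Hy] := inf_adherent e20 (conj (ex_intro _ _ Sne) Slb).
rewrite -/l in Hy.
set X := l + e / 2.
have qp : (0 : R) < q%:R by rewrite ltr0n.
have hq : hh q < X * q%:R by rewrite -ltr_pdivrMr.
set Lr : R := (L'.+1)%:R.
set qr : R := q%:R.
have Lr0 : 0 <= Lr by [].
set C := (Lr + qr) * `|X| + `|ln pm| + Lr * `|l|.
have C0 : 0 <= C by rewrite /C !addr_ge0 // mulr_ge0 // addr_ge0 // ltW.
have Ce : 0 <= 2 * C / e by rewrite divr_ge0 // ?mulr_ge0 // ltW.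
exists (Num.bound (2 * C / e)) => //.
move=> m /= Hm.
set mr : R := m%:R.
have Hme : 2 * C < mr * e.
  rewrite -ltr_pdivrMr //; apply: lt_le_trans (archi_boundP Ce) _; by rewrite ler_nat.
have mr0 : 0 < mr by nra.
set a := B (m + L')%N.
have Ep := E_pos (m + L')%N.
have pm1 : pm <= 1.
  have := le_trans (B_lb (m + L')%N) (B_ub _). nra.
have a0 : 0 < a by apply: lt_le_trans (B_lb _); rewrite mulr_gt0.
set n := (m + L').+1.
have hn : hh n = ln (E (m + L')%N) by [].
have up1 : ln a <= hh n by rewrite hn ler_ln ?posrE // B_ub.
set j := (n %/ q)%N.
set r := (n %% q)%N.
have hnq : (j * q + r)%N = n by rewrite /j /r -divn_eq.
have rq : (r < q)%N by rewrite /r ltn_pmod.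
have up2 : hh n <= j%:R * hh q.
  rewrite -hnq; apply: le_trans (hh_sub _ _) _.
  have := hh_le0 r; have := hh_mul j q; lra.
have hnr : j%:R * qr + r%:R = mr + Lr.
  by rewrite /qr /mr /Lr -natrM -natrD hnq /n -addnS natrD.
have rr0 : (0 : R) <= r%:R by [].
have rrq : (r%:R : R) < qr by rewrite ltr_nat.
have jr0 : (0 : R) <= j%:R by [].
have up3 : j%:R * hh q <= j%:R * qr * X.
  by rewrite -mulrA [qr * X]mulrC; apply: ler_wpM2l => //; apply: ltW.
have hX1 := ler_norm X.
have hX2 : - X <= `|X| by rewrite -normrN ler_norm.
have up4 : (Lr - r%:R) * X <= (Lr + qr) * `|X| by nra.
have up : ln a < mr * (l + e).
  have : (Lr + qr) * `|X| <= C by rewrite /C; have := normr_ge0 (ln pm); have := normr_ge0 l; nra.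
  rewrite /X in up3 up4 *; nra.
have lo1 : ln pm + hh n <= ln a.
  rewrite hn -lnM ?posrE // ler_ln ?posrE ?mulr_gt0 //.
have lo2 : l * (mr + Lr) <= hh n.
  by rewrite -hnr; rewrite hnr /mr /Lr -natrD addnS; apply: l_le.
have lp1 := ler_norm (- ln pm); rewrite normrN in lp1.
have lp2 := ler_norm (- l); rewrite normrN in lp2.
have lo : mr * (l - e) < ln a.
  have : `|ln pm| + Lr * `|l| <= C by rewrite /C; have := normr_ge0 X; nra.
  nra.
rewrite mulrC -ltr_pdivrMr // in up. rewrite mulrC -ltr_pdivlMr // in lo.
have -> : - l - - (ln a / mr) = ln a / mr - l by ring.
rewrite ltr_norml; apply/andP; split; lra.
Qed.

End Fek.
Lemma right_eig (R : realType) N (P : 'M[R]_N) theta : eigenvalue P theta ->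
  exists v : 'I_N -> R, (forall a, \sum_b P a b * v b = theta * v a) /\ exists i, v i != 0.
Proof.
case/eigenvalueP => w Hw w0.
have : \det (P - theta%:M) == 0.
  by apply/det0P; exists w => //; rewrite mulmxBr Hw mul_mx_scalar subrr.
rewrite -det_tr => /det0P [z z0 Hz].
exists (fun b => z 0 b); split.
  move=> a; move: Hz; rewrite raddfB /= tr_scalar_mx mulmxBr mul_mx_scalar => /eqP.
  rewrite subr_eq0 => /eqP /rowP /(_ a); rewrite !mxE => <-.
  by apply: eq_bigr => b _; rewrite mxE mulrC.
apply/existsP; apply: contraNT z0; rewrite negb_exists => /forallP H.
by apply/eqP/rowP => i; rewrite mxE; apply/eqP; have := H i; rewrite negbK.
Qed.
Lemma unif_K N (Q : 'I_N -> nat -> Prop) :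
  (forall s k k', (k <= k')%N -> Q s k -> Q s k') -> (forall s, exists k, Q s k) ->
  exists K, forall s, Q s K.
Proof.
move=> Hm He.
suff [K HK] : exists K, forall s, s \in index_enum 'I_N -> Q s K.
  by exists K => s; apply: HK; rewrite mem_index_enum.
elim: (index_enum 'I_N) => [|s r [K HK]]; first by exists 0%N.
have [k Hk] := He s.
exists (maxn K k) => s'; rewrite inE => /orP [/eqP -> | hs].
  by apply: Hm Hk; rewrite leq_maxr.
by apply: Hm (HK _ hs); rewrite leq_maxl.
Qed.

Theorem theorem3p4 (R : realType) (N : nat) (A P : 'M[R]_N) (p : 'rV[R]_N)
  (theta : R) (u : seq 'I_N) :
  zero_one A -> irreducible_mx A ->
  row_stochastic P -> (forall i j, 0 < P i j <-> A i j = 1) ->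
  stationary P p ->
  eigenvalue P theta -> 0 < theta -> theta != 1 ->
  (forall lam : R, eigenvalue P lam -> 0 < lam -> lam != 1 -> lam <= theta) ->
  (0 < size u)%N -> allowed A u ->
  exists rho : R,
    (fun m : nat => - (ln (mu_W P p u m) / m%:R)) @ \oo --> rho /\
    0 < rho /\ rho <= - ln theta.
Proof.
move=> ZA IA HP HPA Hp Hev th0 th1 _ Hu Hal.
case: u Hu Hal => [|u0 u'] // _ Hal.
have [P0 P1] := HP.
have ppos := stat_all_pos ZA IA HP HPA Hp.
have [v [Pv [i0 vi0]]] := right_eig Hev.
set uL := last u0 u'.
set c : R := if v uL <= 0 then 1 else -1.
set v' := fun b => c * v b.
have c0 : c != 0 by rewrite /c; case: ifP => _; rewrite ?oppr_eq0 oner_eq0.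
have Pv' : forall a, \sum_b P a b * v' b = theta * v' a.
  move=> a; rewrite /v'; under eq_bigr do rewrite mulrCA.
  by rewrite -mulr_sumr Pv mulrCA.
have vL' : v' uL <= 0.
  rewrite /v' /c; case: ifP => H; first by rewrite mul1r.
  by rewrite mulN1r oppr_le0; apply: ltW; rewrite ltNge H.
have piv : \sum_a p 0 a * v' a = 0.
  have E1 : \sum_a p 0 a * (theta * v' a) = \sum_a p 0 a * v' a.
    under eq_bigr do rewrite -Pv' mulr_sumr.
    rewrite exchange_big /=; apply: eq_bigr => b _.
    case: Hp => _ [_ pP].
    rewrite -[in RHS]pP mxE mulr_suml; apply: eq_bigr => a _; by rewrite mulrA.
  move: E1; under eq_bigr do rewrite mulrCA; rewrite -mulr_sumr => /eqP.
  rewrite -subr_eq0 -[X in _ - X]mul1r -mulrBl mulf_eq0 subr_eq0 (negbTE th1) /=.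
  by move/eqP.
have [s vs] : exists s, 0 < v' s.
  case: (boolP [exists s, 0 < v' s]) => [/existsP //|]; rewrite negb_exists => /forallP H; exfalso.
  have Hz : forall a, - (p 0 a * v' a) = 0.
    move=> a; have := @psumr_eq0P _ _ predT (fun a => - (p 0 a * v' a)).
    apply=> //.
      move=> b _; rewrite oppr_ge0 pmulr_rle0 ?ppos //; rewrite leNgt; exact: H.
    by rewrite sumrN piv oppr0.
  have := Hz i0; move/eqP; rewrite oppr_eq0 mulf_eq0 (gt_eqF (ppos i0)) /= /v' mulf_eq0 (negbTE c0) /=.
  by rewrite (negbTE vi0).
set u := u0 :: u'.
set V := \sum_i `|v' i|.
have V0 : 0 < V.
  rewrite /V (bigD1 s) //=.
  have : 0 < `|v' s| by rewrite normr_gt0 gt_eqF.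
  have : 0 <= \sum_(i | i != s) `|v' i| by apply: sumr_ge0 => i _; apply: normr_ge0.
  lra.
have nocc : ~~ occ u s [::].
  rewrite /occ infixs1 /u /=; apply/negP => /eqP [E1 E2].
  by move: vL'; rewrite /uL E1 E2 /= leNgt vs.
set c1 := v' s / V.
have c10 : 0 < c1 by rewrite divr_gt0.
have E_lb : forall n, c1 * theta ^+ n <= Emx P u n.
  move=> n.
  have H1 := Dv_lb P0 Pv' th0 vL' n nocc.
  have H2 := Dv_ub u0 u' P0 v' n s [::].
  have H3 := mxs_ub (fun s => Wt P u n s [::]) s.
  rewrite /Emx; apply: le_trans _ H3 => /=.
  rewrite /c1 mulrAC ler_pdivrMr // mulrC.
  apply: le_trans H1 _; apply: le_trans H2 _; by rewrite mulrC.
have E_le1 : forall n, Emx P u n <= 1.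
  by move=> n; apply: mxs_le => // i; apply: Wt_le1.
have E_sub := Emx_split u P0 P1.
have [K HK] : exists K, forall s, Wt P u K s [::] < 1.
  apply: (@unif_K N (fun s k => Wt P u k s [::] < 1)).
    by move=> s' k k' hk H; apply: le_lt_trans H; apply: Wt_mono_gen.
  move=> s'.
  have [t0 Ht0] := irr_path s' u0 ZA IA HPA.
  have Hpath : path (fun a b => 0 < P a b) s' (t0 ++ u).
    by rewrite /u -cat_rcons cat_path Ht0 last_rcons /= (allowed_path ZA HPA Hal).
  exists (size (t0 ++ u)).
  have Hocc : occ u s' ([::] ++ (t0 ++ u)) by rewrite /occ cat0s -cat_cons; exact: suffix_infix.
  have := Wt_hit P0 P1 Hocc; have := path_prob_pos Hpath => /= h1 h2.
  lra.
have E_K : Emx P u K < 1 by apply: mxs_lt => //; exact: ltr01.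
set M' := mxs (fun s => (p 0 s)^-1).
have M'0 : 0 < M'.
  by apply: lt_le_trans (mxs_ub (fun s => (p 0 s)^-1) u0); rewrite invr_gt0.
set pm := M'^-1.
have pm0 : 0 < pm by rewrite invr_gt0.
have pm_le : forall s, pm <= p 0 s.
  move=> s'; rewrite /pm -[p 0 s']invrK lef_pV2 ?posrE ?invr_gt0 //.
  exact: (mxs_ub (fun s => (p 0 s)^-1) s').
set B := fun n => \sum_s p 0 s * Wt P u n s [::].
have B_ub : forall n, B n <= Emx P u n.
  move=> n; rewrite /B.
  have <- : \sum_s p 0 s * Emx P u n = Emx P u n.
    by rewrite -mulr_suml; case: Hp => _ [-> _]; rewrite mul1r.
  apply: ler_sum => s' _; apply: ler_wpM2l; first exact: ltW.
  exact: (mxs_ub (fun s => Wt P u n s [::]) s').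
have B_lb : forall n, pm * Emx P u n <= B n.
  move=> n; rewrite mulrC -ler_pdivlMr //; apply: mxs_le.
    apply: divr_ge0; last exact: ltW.
    by apply: sumr_ge0 => i _; apply: mulr_ge0; [exact: ltW | exact: Wt_ge0].
  move=> s'; rewrite ler_pdivlMr // /B (bigD1 s') //= mulrC.
  apply: le_trans (ler_wpM2r (Wt_ge0 u P0 n s' [::]) (pm_le s')) _.
  rewrite lerDl; apply: sumr_ge0 => i _; apply: mulr_ge0; [exact: ltW | exact: Wt_ge0].
have [rho [Hr1 Hr2]] := fek_main (size u') c10 th0 pm0 E_lb E_le1 E_sub E_K B_lb B_ub.
exists rho; split => //.
suff -> : (fun m : nat => - (ln (mu_W P p u m) / m%:R)) = (fun m : nat => - (ln (B (m + size u')%N) / m%:R)) by [].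
by apply: funext => m; rewrite (@muW_eq _ _ P p u m (size u')).
Qed.
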